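(* Let a natural gas network be given by a connected directed graph with node set $\{1,\dots,N\}$ and edge set $\{1,\dots,E\}$ (no self-loops, no parallel edges), with node-edge incidence matrix $A\in\mathbb{R}^{N\times E}$, and let $B\in\mathbb{R}^{N\times E}$, $\gamma_{1}\in\mathbb{R}^{E}$, $\gamma_{2}\in\mathbb{R}^{E\times N}$, $\gamma_{3}\in\mathbb{R}^{E\times E}$, $\delta\in\mathbb{R}^{N}$ be given. Fix a reference node $\mathrm{r}$ and a value $\mathring{\pi}_{\mathrm{r}}\in\mathbb{R}$. Define $\hat{\gamma}_{2}=A\gamma_{2}$, $\hat{\gamma}_{3}=B+A\gamma_{3}$, assume that the matrix $\hat{\gamma}_{2\backslash\mathrm{r}}$ obtained from $\hat{\gamma}_{2}$ by deleting its $\mathrm{r}$-th row and column is invertible, let $\breve{\gamma}_{2}\in\mathbb{R}^{N\times N}$ have zero $\mathrm{r}$-th row and column and remaining entries equal to those of $\hat{\gamma}_{2\backslash\mathrm{r}}^{-1}$, and set $\grave{\gamma}_{2}=\gamma_{2}\breve{\gamma}_{2}$, $\grave{\gamma}_{3}=\gamma_{2}\breve{\gamma}_{2}\hat{\gamma}_{3}-\gamma_{3}$. For $\vartheta\in\mathbb{R}^{N}$, $\kappa\in\mathbb{R}^{E}$, $\varphi\in\mathbb{R}^{E}$, $\pi\in\mathbb{R}^{N}$, $\alpha\in\mathbb{R}^{N\times N}$, $\beta\in\mathbb{R}^{E\times N}$, define the network response model, for $\xi\in\mathbb{R}^{N}$, $$\tilde{\vartheta}(\xi)=\vartheta+\alpha\xi,\quad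 \tilde{\kappa}(\xi)=\kappa+\beta\xi,\quad \tilde{\pi}(\xi)=\pi+\breve{\gamma}_{2}(\alpha-\hat{\gamma}_{3}\beta-I_{N})\xi,\quad \tilde{\varphi}(\xi)=\varphi+\big(\grave{\gamma}_{2}(\alpha-I_{N})-\grave{\gamma}_{3}\beta\big)\xi,$$ and $\tilde{\delta}(\xi)=\delta+\xi$. Suppose that $$A\varphi=\vartheta-B\kappa-\delta,\qquad (\alpha-B\beta)^{\top}\mathbb{1}=\mathbb{1},\qquad \varphi=\gamma_{1}+\gamma_{2}\pi+\gamma_{3}\kappa,\qquad \pi_{\mathrm{r}}=\mathring{\pi}_{\mathrm{r}},\ [\alpha]_{\mathrm{r}}=\mathbb{0}^{\top},\ [\beta]_{\mathrm{r}}=\mathbb{0}^{\top}.$$ Then the model is admissible, i.e., for every $\xi\in\mathbb{R}^{N}$, $$A\tilde{\varphi}(\xi)=\tilde{\vartheta}(\xi)-B\tilde{\kappa}(\xi)-\tilde{\delta}(\xi),\qquad \tilde{\varphi}(\xi)=\gamma_{1}+\gamma_{2}\tilde{\pi}(\xi)+\gamma_{3}\tilde{\kappa}(\xi),\qquad \tilde{\pi}_{\mathrm{r}}(\xi)=\mathring{\pi}_{\mathrm{r}}.$$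
   Context: The node-edge incidence matrix is defined by: for each edge $\ell=(n,n')$ directed from sending node $n$ to receiving node $n'$, $A_{n\ell}=+1$, $A_{n'\ell}=-1$, and $A_{k\ell}=0$ otherwise. $\mathbb{1}$ and $\mathbb{0}$ denote all-ones and all-zeros vectors of appropriate dimension, $I_N$ the identity matrix, and $[M]_{\mathrm{r}}$ the $\mathrm{r}$-th row of a matrix $M$. $\vartheta$ are gas injections, $\kappa$ pressure regulation rates, $\varphi$ flow rates, $\pi$ squared pressures, $\alpha,\beta$ recourse (policy) matrices, $\delta$ mean extractions and $\xi$ the extraction forecast error. The equation $\varphi=\gamma_{1}+\gamma_{2}\pi+\gamma_{3}\kappa$ is a linearized Weymouth equation with given coefficients $\gamma_1,\gamma_2,\gamma_3$. *)

(* Defs.v *)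
From HB Require Import structures.
From mathcomp Require Import all_boot all_order all_algebra.
Set Implicit Arguments. Unset Strict Implicit. Unset Printing Implicit Defensive.
Import Order.TTheory GRing.Theory Num.Theory.
Local Open Scope ring_scope.

Definition no_self_loops (N E : nat) (src dst : 'I_E -> 'I_N) : Prop :=
  forall e, src e != dst e.

Definition no_parallel_edges (N E : nat) (src dst : 'I_E -> 'I_N) : Prop :=
  forall e e', src e = src e' -> dst e = dst e' -> e = e'.

Definition adj (N E : nat) (src dst : 'I_E -> 'I_N) : rel 'I_N :=
  fun n m => [exists e, ((src e == n) && (dst e == m)) || ((src e == m) && (dst e == n))].

Definition connected_graph (N E : nat) (src dst : 'I_E -> 'I_N) : Prop :=
  forall n m, connect (adj src dst) n m.

Definition incidence (R : ringType) (N E : nat) (src dst : 'I_E -> 'I_N) : 'M[R]_(N, E) :=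
  \matrix_(n, l) (if n == src l then 1 else if n == dst l then -1 else 0).

Definition g2hat (R : ringType) (N E : nat) (A : 'M[R]_(N, E)) (g2 : 'M[R]_(E, N)) : 'M[R]_N :=
  A *m g2.

Definition g3hat (R : ringType) (N E : nat) (A B : 'M[R]_(N, E)) (g3 : 'M[R]_E) : 'M[R]_(N, E) :=
  B + A *m g3.

Definition del_rc (R : Type) (N : nat) (r : 'I_N) (M : 'M[R]_N) : 'M[R]_(N.-1) :=
  row' r (col' r M).

Definition g2breve (R : comUnitRingType) (N : nat) (r : 'I_N) (G2hat : 'M[R]_N) : 'M[R]_N :=
  \matrix_(i, j)
    match unlift r i, unlift r j with
    | Some i', Some j' => invmx (del_rc r G2hat) i' j'
    | _, _ => 0
    end.

Definition ones (R : ringType) (n : nat) : 'cV[R]_n := const_mx 1.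

(* Main.v *)
Require Import Defs.
From HB Require Import structures.
From mathcomp Require Import all_boot all_order all_algebra.
Import Order.TTheory GRing.Theory Num.Theory.
Local Open Scope ring_scope.
Lemma zm1 (V : zmodType) (a b c d e f : V): a - b - c + (d - e - f) = a + d - (b + e) - (c + f).
Proof. rewrite !opprD !addrA. rewrite (addrAC _ d). rewrite (addrAC _ d). rewrite (addrAC _ (-c) (-e)). by rewrite addrC !addrA (addrC d a). Qed.
Lemma zm2 (V : zmodType) (a b c d e : V): a + b + c + (d + e) = a + (b + d) + (c + e).
Proof. by rewrite !addrA (addrAC _ c d). Qed.

Lemma colsum_inc (R : ringType) N E (src dst : 'I_E -> 'I_N) :
  no_self_loops src dst -> forall l, \sum_n incidence R src dst n l = 0.
Proof.
move=> Hl l; rewrite (bigD1 (src l)) //= (bigD1 (dst l)) /=; last by rewrite eq_sym Hl.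
rewrite big1 ?addr0; last by move=> n /andP[a b]; rewrite mxE (negbTE a) (negbTE b).
rewrite !mxE eqxx eq_sym (negbTE (Hl l)) eqxx addrN; done.
Qed.

Lemma colsum_mul (R : ringType) N E K (A : 'M[R]_(N,E)) (G : 'M[R]_(E,K)) :
  (forall l, \sum_n A n l = 0) -> forall k, \sum_n (A *m G) n k = 0.
Proof.
move=> H k. under eq_bigr do rewrite mxE.
rewrite exchange_big /= big1 // => l _; by rewrite -mulr_suml H mul0r.
Qed.

Lemma Pform (R : comUnitRingType) N (r : 'I_N) (G : 'M[R]_N) :
  del_rc r G \in unitmx -> (forall k, \sum_n G n k = 0) ->
  G *m g2breve r G = 1%:M - \matrix_(i, j) (i == r)%:R.
Proof.
move=> Hu Hc; apply/matrixP => i j; rewrite !mxE.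
have Gr : forall k, G r k = - \sum_(i' < N.-1) G (lift r i') k.
  by move=> k; have := Hc k; rewrite (bigD1_ord r) //= => /eqP; rewrite addr_eq0 => /eqP.
rewrite (bigD1_ord r) //= !mxE unlift_none mulr0 add0r.
case: (unliftP r j) => [j'|] -> ; last first.
  rewrite big1; last by move=> k _; rewrite !mxE unlift_none; case: (unlift r _) => *; rewrite mulr0.
  idtac.
  rewrite eq_sym; by case: (i =P r) => [->|]; rewrite ?subrr // subr0.
under eq_bigr do rewrite mxE !liftK.
have Hinv := mulmxV Hu.
case: (unliftP r i) => [i'|] ->.
  have := congr1 (fun M : 'M[R]_N.-1 => M i' j') Hinv; rewrite !mxE => E1.
  have h : (lift r i' == r) = false by apply/negbTE; rewrite eq_sym neq_lift.
  rewrite h subr0 (inj_eq (@lift_inj _ r)) -E1.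
  by apply: eq_bigr => k _; rewrite /del_rc !mxE.
rewrite eqxx (negbTE (neq_lift r j')) sub0r.
under eq_bigr do rewrite Gr mulNr mulr_suml.
rewrite sumrN exchange_big /=; congr (- _).
transitivity (\sum_(i' < N.-1) (1%:M : 'M[R]_N.-1) i' j').
  rewrite -Hinv; apply: eq_bigr => i' _; rewrite !mxE; apply: eq_bigr => k _.
  by rewrite /del_rc !mxE.
by rewrite (bigD1 j') //= big1 ?mxE ?eqxx ?addr0 // => k /negbTE nk; rewrite mxE nk.
Qed.
Theorem lemma2 (R : realFieldType) (N E : nat)
  (src dst : 'I_E -> 'I_N)
  (Hloop : no_self_loops src dst)
  (Hpar : no_parallel_edges src dst)
  (Hconn : connected_graph src dst)
  (B : 'M[R]_(N, E)) (g1 : 'cV[R]_E) (g2 : 'M[R]_(E, N)) (g3 : 'M[R]_E)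
  (delta : 'cV[R]_N) (r : 'I_N) (pi_r0 : R)
  (Hinv : del_rc r (g2hat (incidence R src dst) g2) \in unitmx)
  (vt : 'cV[R]_N) (ka : 'cV[R]_E) (ph : 'cV[R]_E) (pi : 'cV[R]_N)
  (al : 'M[R]_N) (be : 'M[R]_(E, N))
  (H1 : incidence R src dst *m ph = vt - B *m ka - delta)
  (H2 : (al - B *m be)^T *m ones R N = ones R N)
  (H3 : ph = g1 + g2 *m pi + g3 *m ka)
  (H4 : pi r 0 = pi_r0)
  (H5 : forall j, al r j = 0)
  (H6 : forall (e : 'I_E), nat_of_ord e = nat_of_ord r -> forall j, be e j = 0) :
  let A := incidence R src dst in
  let G2h := g2hat A g2 in
  let G3h := g3hat A B g3 in
  let G2b := g2breve r G2h in
  let G2g := g2 *m G2b in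
  let G3g := g2 *m G2b *m G3h - g3 in
  let vt_t := fun xi : 'cV[R]_N => vt + al *m xi in
  let ka_t := fun xi : 'cV[R]_N => ka + be *m xi in
  let pi_t := fun xi : 'cV[R]_N => pi + G2b *m (al - G3h *m be - 1%:M) *m xi in
  let ph_t := fun xi : 'cV[R]_N => ph + (G2g *m (al - 1%:M) - G3g *m be) *m xi in
  let de_t := fun xi : 'cV[R]_N => delta + xi in
  forall xi : 'cV[R]_N,
    [/\ A *m ph_t xi = vt_t xi - B *m ka_t xi - de_t xi,
        ph_t xi = g1 + g2 *m pi_t xi + g3 *m ka_t xi
      & pi_t xi r 0 = pi_r0].
Proof.
move=> A G2h G3h G2b G2g G3g vt_t ka_t pi_t ph_t de_t xi.
have colA : forall l, \sum_n A n l = 0 by exact: colsum_inc.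
have colG := @colsum_mul _ _ _ _ A g2 colA.
have P : G2h *m G2b = 1%:M - \matrix_(i, j) (i == r)%:R := @Pform _ _ r G2h Hinv colG.
set M := al - G3h *m be - 1%:M.
have ErM : (\matrix_(i, j) (i == r)%:R : 'M[R]_N) *m M = 0.
  apply/matrixP => i j; rewrite !mxE.
  under eq_bigr do rewrite mxE.
  rewrite -mulr_sumr; apply/eqP; rewrite mulf_eq0; apply/orP; right; apply/eqP.
  have h2 := congr1 (fun v : 'cV[R]_N => v j 0) H2; rewrite /= !mxE in h2.
  have colAg := @colsum_mul _ _ _ _ (A *m g3) be (fun l => @colsum_mul _ _ _ _ A g3 colA l) j.
  rewrite /M /G3h /g3hat mulmxDl.
  under eq_bigr do rewrite !mxE.
  under eq_bigr do rewrite opprD addrA.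
  rewrite !sumrB.
  move: colAg; under eq_bigr do rewrite mxE; move=> ->.
  move: h2; under eq_bigr do rewrite !mxE mulr1.
  rewrite sumrB => h2.
  have d1 : \sum_(i0 < N) ((i0 == j)%:R : R) = 1.
    by rewrite (bigD1 j) //= eqxx big1 ?addr0 // => k /negbTE ->.
  by rewrite d1 subr0 h2 subrr.
have zm3 : forall (V : zmodType) (a b c d : V), a - b - c + d = a - c - (b - d).
  by move=> V a b c d; rewrite opprB !addrA (addrAC a (-b)) (addrAC _ (-b)).
have XM : G2g *m (al - 1%:M) - G3g *m be = g2 *m G2b *m M + g3 *m be.
  rewrite /M /G2g /G3g !mulmxBr !mulmxBl !mulmxA.
  by rewrite zm3.
have P' : A *m g2 *m G2b = 1%:M - \matrix_(i, j) (i == r)%:R := P.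
have AX : A *m (G2g *m (al - 1%:M) - G3g *m be) = al - B *m be - 1%:M.
  rewrite XM mulmxDr !mulmxA P' mulmxBl mul1mx ErM subr0 /M /G3h /g3hat mulmxDl.
  rewrite opprD addrA -[X in X = _]addrA (addrC (-1%:M)) addrA.
  by rewrite subrK.
split.
- rewrite /ph_t mulmxDr H1 mulmxA AX.
  rewrite /vt_t /ka_t /de_t !mulmxBl mul1mx mulmxDr mulmxA; exact: zm1.
- rewrite /ph_t XM /pi_t /ka_t H3.
  rewrite mulmxDl (mulmxDr g2) (mulmxDr g3) !mulmxA; exact: zm2.
- rewrite /pi_t mxE H4 -mulmxA mxE big1 ?addr0 // => k _.
  by rewrite mxE unlift_none mul0r.
Qed.
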